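(* Let $G$ be a graph whose twin graph $G^*$ is isomorphic to a 5-cycle with one chord (so $G^*$ has two adjacent degree-3 vertices and three degree-2 vertices, two of which are adjacent to each other), where the two adjacent degree-2 vertices are of type (1) and the other three vertices are of type (1K). Then $D(G)\neq n(G)-2$.
   Context: All graphs are finite and simple; $n(G)=|V(G)|$; $N_G(u)$ is the neighborhood of $u$. A distinguishing coloring of a graph $G$ is a (not necessarily proper) vertex coloring such that the only automorphism of $G$ mapping every vertex to a vertex of the same color is the identity; the distinguishing number $D(G)$ is the minimum number of colors in a distinguishing coloring of $G$. Two distinct vertices $u,v$ are twins if $N_G(u)\setminus\{v\}=N_G(v)\setminus\{u\}$. The relation $u\equiv v$ iff $u=v$ or $u,v$ are twins is an equivalence relation; the class of $v$ is denoted $v^*$. The twin graph $G^*$ has the equivalence classes as vertices, distinct classes $u^*,v^*$ being adjacent iff $uv\in E(G)$. Each class induces a complete or an edgeless graph. A class $v^*$ is of type (1) if $|v^*|=1$, of type (K) if $|v^*|\ge 2$ and it induces a complete graph, and of type (N) if $|v^*|\ge2$ and it induces an edgeless graph; type (1K) means type (1) or (K), type (1N) means (1) or (N), and type (KN) means (K) or (N). *)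

(* Defs.v *)
From mathcomp Require Import all_boot fingroup perm.
Set Implicit Arguments. Unset Strict Implicit. Unset Printing Implicit Defensive.

Definition simple_graph (T : finType) (e : rel T) : Prop :=
  symmetric e /\ irreflexive e.

Section Defs.
Variables (T : finType) (e : rel T).

Definition nbhd (u : T) : {set T} := [set w | e u w].

Definition twins (u v : T) : bool :=
  (u != v) && (nbhd u :\ v == nbhd v :\ u).

Definition twin_eq (u v : T) : bool := (u == v) || twins u v.

Definition twin_class (v : T) : {set T} := [set u | twin_eq u v].

Definition is_twin_class (C : {set T}) : Prop := exists v, C = twin_class v.

Definition type1 (C : {set T}) : bool := #|C| == 1.
Definition typeK (C : {set T}) : bool :=
  (2 <= #|C|) && [forall u in C, forall v in C, (u != v) ==> e u v].
Definition typeN (C : {set T}) : bool :=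
  (2 <= #|C|) && [forall u in C, forall v in C, ~~ e u v].
Definition type1K (C : {set T}) : bool := type1 C || typeK C.

(* The twin graph G^* is isomorphic to the graph H on 'I_k (given by rel h)
   via phi : phi is a bijection from 'I_k onto the set of twin classes, and
   distinct classes phi i, phi j are adjacent in G^* (some/any u in phi i,
   v in phi j with uv in E(G)) iff h i j. *)
Definition twin_graph_iso (k : nat) (h : rel 'I_k) (phi : 'I_k -> {set T}) : Prop :=
  [/\ injective phi,
      (forall i, is_twin_class (phi i)),
      (forall C, is_twin_class C -> exists i, C = phi i) &
      (forall i j, i != j ->
         (h i j <-> exists u v, [/\ u \in phi i, v \in phi j & e u v]))].

Definition automorphism (s : {perm T}) : Prop :=
  forall u v, e (s u) (s v) = e u v.

Definition distinguishing (k : nat) (c : T -> 'I_k) : Prop :=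
  forall s : {perm T}, automorphism s -> (forall x, c (s x) = c x) -> s = 1%g.

Definition has_dist_col (k : nat) : Prop := exists c : T -> 'I_k, distinguishing c.

Lemma has_dist_col_card : has_dist_col #|T|.
Proof.
exists (@enum_rank T) => s _ Hs; apply/permP => x; rewrite perm1.
by apply: enum_rank_inj; rewrite Hs.
Qed.

Definition has_dist_colb (k : nat) : bool :=
  [exists c : {ffun T -> 'I_k},
   [forall s : {perm T}, [forall u, forall v, e (s u) (s v) == e u v] ==>
      [forall x, c (s x) == c x] ==> (s == 1%g)]].

Lemma has_dist_colP k : reflect (has_dist_col k) (has_dist_colb k).
Proof.
apply: (iffP existsP).
- move=> [c /forallP Hc]; exists c => s Ha Hs.
  apply/eqP; move: (Hc s) => /implyP H1.
  have H2 := H1 (introT forallP (fun u => introT forallP (fun v => introT eqP (Ha u v)))).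
  by move/implyP: H2; apply; apply/forallP => x; rewrite Hs.
- move=> [c Hc]; exists (finfun c); apply/forallP => s; apply/implyP => /forallP Ha.
  apply/implyP => /forallP Hs; apply/eqP; apply: Hc.
    by move=> u v; move/forallP: (Ha u) => /(_ v) /eqP.
  by move=> x; move/eqP: (Hs x); rewrite !ffunE.
Qed.

Lemma has_dist_col_ex : exists k, has_dist_colb k.
Proof. by exists #|T|; apply/has_dist_colP; exact: has_dist_col_card. Qed.

Definition distinguishing_number : nat := ex_minn has_dist_col_ex.

End Defs.

(* The "house": 5-cycle 0-1-2-3-4-0 with chord 0-2.
   Degree-3 vertices: 0, 2 (adjacent); degree-2 vertices: 1, 3, 4;
   the two adjacent degree-2 vertices are 3 and 4. *)
Definition house_edge (a b : nat) : bool :=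
  [|| (a == 0) && (b == 1), (a == 1) && (b == 2), (a == 2) && (b == 3),
      (a == 3) && (b == 4), (a == 4) && (b == 0) | (a == 0) && (b == 2)].
Definition house : rel 'I_5 := fun i j => house_edge i j || house_edge j i.

(* Main.v *)
Require Import Defs.
From mathcomp Require Import all_boot fingroup perm.
From mathcomp Require Import zify.

Set Implicit Arguments. Unset Strict Implicit. Unset Printing Implicit Defensive.

Definition hn (a b : nat) := house_edge a b || house_edge b a.
Definition qn (a b c d i : nat) : nat := nth i [:: a; b; c; d] i.
Definition chkb := all (fun a => all (fun b => all (fun c => all (fun d =>
  all (fun i => all (fun j => hn (qn a b c d i) (qn a b c d j) == hn i j) (iota 0 5)) (iota 0 5)
  ==> [&& a == 0, b == 1, c == 2 & d == 3]) (iota 0 5)) (iota 0 5)) (iota 0 5)) (iota 0 5).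
Lemma chk : chkb.
Proof. vm_compute. reflexivity. Qed.

Definition i0 : 'I_5 := @Ordinal 5 0 isT.
Definition i1 : 'I_5 := @Ordinal 5 1 isT.
Definition i2 : 'I_5 := @Ordinal 5 2 isT.
Definition i3 : 'I_5 := @Ordinal 5 3 isT.
Definition i4 : 'I_5 := @Ordinal 5 4 isT.

Lemma qnE (p : 'I_5 -> 'I_5) n (hn5 : n < 5) : p i4 = i4 ->
  qn (p i0) (p i1) (p i2) (p i3) n = p (Ordinal hn5).
Proof.
move=> H4.
case: n hn5 => [|[|[|[|[|n]]]]] hn5 //; rewrite /qn /=;
  try (by congr (val (p _)); apply: val_inj).
by rewrite (_ : Ordinal hn5 = i4) ?H4 //; apply: val_inj.
Qed.

Lemma chk_use (p : 'I_5 -> 'I_5) : p i4 = i4 ->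
  (forall i j, house (p i) (p j) = house i j) -> forall i, p i = i.
Proof.
move=> H4 H.
have mem (i : 'I_5) : (val (p i) \in iota 0 5) by rewrite mem_iota /= ltn_ord.
have := chk; rewrite /chkb.
move/allP/(_ _ (mem i0))/allP/(_ _ (mem i1))/allP/(_ _ (mem i2))/allP/(_ _ (mem i3)).
have Hpre : all (fun i => all (fun j => hn (qn (p i0) (p i1) (p i2) (p i3) i)
   (qn (p i0) (p i1) (p i2) (p i3) j) == hn i j) (iota 0 5)) (iota 0 5).
  apply/allP => n; rewrite mem_iota => /andP[_ hn5].
  apply/allP => m; rewrite mem_iota => /andP[_ hm5].
  rewrite (qnE hn5 H4) (qnE hm5 H4).
  by move: (H (Ordinal hn5) (Ordinal hm5)); rewrite /house /hn /= => ->.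
move/implyP/(_ Hpre)=> /and4P[/eqP a /eqP b /eqP c /eqP d] [k hk].
apply: val_inj => /=.
case: k hk => [|[|[|[|[|k]]]]] hk //=.
- by rewrite (_ : Ordinal hk = i0) ?a //; apply: val_inj.
- by rewrite (_ : Ordinal hk = i1) ?b //; apply: val_inj.
- by rewrite (_ : Ordinal hk = i2) ?c //; apply: val_inj.
- by rewrite (_ : Ordinal hk = i3) ?d //; apply: val_inj.
- by rewrite (_ : Ordinal hk = i4) ?H4 //; apply: val_inj.
Qed.

Section Twin.
Variables (T : finType) (e : rel T).
Hypotheses (Hsym : symmetric e) (Hirr : irreflexive e).

Lemma twinsE u v : twins e u v -> forall x, x != u -> x != v -> e u x = e v x.
Proof.
move=> /andP[_ /eqP H] x xu xv.
have := congr1 (fun A : {set T} => x \in A) H.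
by rewrite /= !in_setD1 !in_set xu xv.
Qed.

Lemma twinsI u v : u != v -> (forall x, x != u -> x != v -> e u x = e v x) ->
  twins e u v.
Proof.
move=> uv H; rewrite /twins uv /=; apply/eqP/setP => x.
rewrite !in_setD1 !in_set.
case: (eqVneq x v) => [->|xv] /=; first by rewrite Hirr andbF.
case: (eqVneq x u) => [->|xu] /=; first by rewrite Hirr.
exact: H.
Qed.

Lemma twin_eqE u v : twin_eq e u v -> forall x, x != u -> x != v -> e u x = e v x.
Proof. by case/orP => [/eqP ->|/twinsE] //. Qed.

Lemma twin_eq_sym u v : twin_eq e u v -> twin_eq e v u.
Proof.
case/orP => [/eqP ->|H]; first by rewrite /twin_eq eqxx.
apply/orP; right; apply: twinsI; first by rewrite eq_sym; case/andP: H.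
by move=> x xv xu; rewrite (twinsE H).
Qed.

Lemma twin_eq_trans u v w : twin_eq e u v -> twin_eq e v w -> twin_eq e u w.
Proof.
case/orP => [/eqP ->|Huv] //.
case/orP => [/eqP <-|Hvw]; first by rewrite /twin_eq Huv orbT.
case: (eqVneq u w) => [->|uw]; first by rewrite /twin_eq eqxx.
have uv : u != v by case/andP: Huv.
have vw : v != w by case/andP: Hvw.
apply/orP; right; apply: twinsI => // x xu xw.
case: (eqVneq x v) => [->|xv].
  rewrite (Hsym u v) (twinsE Hvw (x:=u)) //.
  rewrite (Hsym w u) (twinsE Huv (x:=w)); first exact: Hsym.
    by rewrite eq_sym.
  by rewrite eq_sym.
by rewrite (twinsE Huv xu xv) (twinsE Hvw xv xw).
Qed.

Lemma twin_classE u v : twin_eq e u v -> twin_class e u = twin_class e v.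
Proof.
move=> H; apply/setP => x; rewrite !in_set; apply/idP/idP => Hx.
  exact: twin_eq_trans Hx H.
exact: twin_eq_trans Hx (twin_eq_sym H).
Qed.

End Twin.

Theorem lemma4p8 (T : finType) (e : rel T) (phi : 'I_5 -> {set T}) :
  simple_graph e ->
  twin_graph_iso e house phi ->
  (forall i : 'I_5, (3 <= val i)%N -> type1 (phi i)) ->
  (forall i : 'I_5, (val i < 3)%N -> type1K e (phi i)) ->
  distinguishing_number e <> (#|T| - 2)%N.
Proof.
move=> [Hsym Hirr] [Hinj Hcl Hsurj Hadj] _ _.
have Hcl2 i : exists v, phi i == twin_class e v.
  by have [v ->] := Hcl i; exists v.
pose r i := xchoose (Hcl2 i).
have Hr i : phi i = twin_class e (r i) by apply/eqP; exact: (xchooseP (Hcl2 i)).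
have rmem i : r i \in phi i by rewrite Hr in_set /twin_eq eqxx.
have memP i x : x \in phi i -> phi i = twin_class e x.
  by rewrite Hr in_set => H; rewrite (twin_classE Hsym Hirr H).
have disj i j x : x \in phi i -> x \in phi j -> i = j.
  by move=> Hi Hj; apply: Hinj; rewrite (memP _ _ Hi) (memP _ _ Hj).
have rinj : injective r.
  by move=> i j Hij; apply: (disj _ _ (r i)) => //; rewrite Hij.
have neqP i j x y : x \in phi i -> y \in phi j -> i != j -> x != y.
  move=> Hx Hy ij; apply/eqP => xy; subst y.
  by move/eqP: ij; apply; exact: disj Hx Hy.
have Hedge i j x y : i != j -> x \in phi i -> y \in phi j -> e x y = house i j.
  move=> ij Hx Hy; apply/idP/idP => H.
    by apply/(Hadj i j ij); exists x, y.
  have [u [v [Hu Hv Huv]]] := (Hadj i j ij).1 H.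
  have tux : twin_eq e u x by move: Hu; rewrite (memP _ _ Hx) in_set.
  have tvy : twin_eq e v y by move: Hv; rewrite (memP _ _ Hy) in_set.
  have ji : j != i by rewrite eq_sym.
  have vu := neqP j i v u Hv Hu ji.
  have vx := neqP j i v x Hv Hx ji.
  have xv := neqP i j x v Hx Hv ij.
  have xy := neqP i j x y Hx Hy ij.
  have exv : e x v by rewrite -(twin_eqE tux).
  by rewrite Hsym -(twin_eqE tvy) // Hsym.
have Hrr i j : e (r i) (r j) = house i j.
  case: (eqVneq i j) => [<-|ij]; last exact: Hedge.
  rewrite Hirr; case: i => [[|[|[|[|[|k]]]]] hk] //.
pose S := [set x in [:: r i0; r i1; r i3]].
have cardS : #|S| = 3.
  rewrite cardsE; apply/card_uniqP.
  by rewrite /= !inE !(inj_eq rinj).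
have r2S : r i2 \in ~: S by rewrite in_setC inE !inE !(inj_eq rinj).
pose f x := if x \in S then r i2 else x.
have fS x : f x \in ~: S by rewrite /f; case: ifP => //; rewrite in_setC => ->.
pose c x := enum_rank_in r2S (f x).
have Hdist : has_dist_col e #|~: S|.
  exists c => s Haut Hcol.
  have Hf x : f (s x) = f x.
    by rewrite -(enum_rankK_in r2S (fS (s x))) -(enum_rankK_in r2S (fS x)) -/(c _) Hcol.
  have Hfix x : x \notin S -> x != r i2 -> s x = x.
    move=> xS xr; have := Hf x; rewrite /f (negbTE xS).
    case: ifP => // _ E; by rewrite E eqxx in xr.
  have Hex i : exists j, s (r i) == r j.
    case: (boolP (r i \in S)) => Hi.
      have := Hf (r i); rewrite /f Hi; case: ifP => [|_ ->]; last by exists i2.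
      by rewrite inE !inE => /or3P[] /eqP ->; [exists i0|exists i1|exists i3].
    case: (eqVneq (r i) (r i2)) => Hi2.
      have := Hf (r i); rewrite /f (negbTE Hi) Hi2 /f; case: ifP => [|_ ->]; last by exists i2.
      by rewrite inE !inE => /or3P[] /eqP ->; [exists i0|exists i1|exists i3].
    by exists i; rewrite Hfix.
  pose p i := xchoose (Hex i).
  have Hp i : s (r i) = r (p i) by apply/eqP; exact: (xchooseP (Hex i)).
  have Hp4 : p i4 = i4.
    apply: (rinj); rewrite -Hp Hfix //.
      by rewrite inE !inE !(inj_eq rinj).
    by rewrite (inj_eq rinj).
  have Hhouse i j : house (p i) (p j) = house i j.
    by rewrite -!Hrr -!Hp Haut.
  have Hpid := chk_use Hp4 Hhouse.
  apply/permP => x; rewrite perm1.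
  case: (boolP (x \in S)) => xS.
    move: xS; rewrite inE !inE => /or3P[] /eqP ->; by rewrite Hp Hpid.
  case: (eqVneq x (r i2)) => [->|xr]; first by rewrite Hp Hpid.
  exact: Hfix.
have Hle : distinguishing_number e <= #|~: S|.
  rewrite /distinguishing_number; case: ex_minnP => m _ Hmin.
  by apply: Hmin; apply/has_dist_colP.
have Hc : #|~: S| = #|T| - 3 by rewrite cardsCs setCK cardS.
have := max_card S; rewrite cardS Hc in Hle *.
lia.
Qed.
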